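(* Let $f\in C([0,1])$ and $\varepsilon>0$. If $K\in\mathbb{N}^+$ satisfies $|f(x_1)-f(x_2)|<\varepsilon/2$ for all $x_1,x_2\in[0,1]$ with $|x_1-x_2|<1/K$, then there exists a function $\phi$ generated by a $\sigma$-activated network with width $2$ and depth $3$ such that $\|\phi\|_{L^\infty([0,1])}\le\|f\|_{L^\infty([0,1])}+1$ and $|\phi(x)-f(x)|<\varepsilon$ for all $x\in\bigcup_{k=0}^{K-1}\big[\tfrac{2k}{2K},\tfrac{2k+1}{2K}\big]$.
   Context: Let $\sigma_1:\mathbb{R}\to\mathbb{R}$ be the continuous triangular-wave function of period $2$: $\sigma_1(x)=|x|$ for $x\in[-1,1]$, $\sigma_1(x+2)=\sigma_1(x)$. The activation is $\sigma(x)=\sigma_1(x)$ for $x\ge0$ and $\sigma(x)=x/(|x|+1)$ for $x<0$, applied entrywise. A function generated by a $\sigma$-activated network with one input, width $N$ and depth $L$ is a function of the form $\mathcal{L}_{\ell}\circ\sigma\circ\mathcal{L}_{\ell-1}\circ\cdots\circ\sigma\circ\mathcal{L}_0$ with $\ell\le L$ hidden layers, affine maps $\mathcal{L}_i$, $\mathcal{L}_0$ with domain $\mathbb{R}$, $\mathcal{L}_\ell$ with codomain $\mathbb{R}$, and at most $N$ neurons in each hidden layer. *)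

(* Defs.v *)
From Stdlib Require Import Reals Lra ZArith List.
Open Scope R_scope.

(* Triangular wave of period 2: sigma1 x = |x| on [-1,1], sigma1 (x+2) = sigma1 x.
   Written as |x - 2*floor((x+1)/2)|. *)
Definition sigma1 (x : R) : R :=
  Rabs (x - 2 * IZR (Int_part ((x + 1) / 2)))
  (* Int_part is floor in Stdlib *).

Definition sigma (x : R) : R :=
  if Rle_dec 0 x then sigma1 x else x / (Rabs x + 1).

Fixpoint fsum (d : nat) (f : nat -> R) : R :=
  match d with
  | O => 0
  | S d' => fsum d' f + f d'
  end.

(* A hidden layer: output width n, weight matrix W (W j i = weight from input
   neuron i to output neuron j), bias b. Vectors are nat -> R, only the first
   (current width) entries are meaningful. *)
Record layer := mkLayer { lw : nat ; lW : nat -> nat -> R ; lb : nat -> R }.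

Fixpoint run_hidden (ls : list layer) (d : nat) (v : nat -> R) : nat * (nat -> R) :=
  match ls with
  | nil => (d, v)
  | l :: ls' =>
      run_hidden ls' (lw l)
        (fun j => sigma (fsum d (fun i => lW l j i * v i) + lb l j))
  end.

Definition realize (ls : list layer) (w : nat -> R) (c : R) (x : R) : R :=
  let '(d, v) := run_hidden ls 1%nat (fun _ => x) in
  fsum d (fun i => w i * v i) + c.

Definition generated_by_net (N L : nat) (phi : R -> R) : Prop :=
  exists (ls : list layer) (w : nat -> R) (c : R),
    (length ls <= L)%nat /\
    Forall (fun l => (lw l <= N)%nat) ls /\
    forall x, phi x = realize ls w c x.

Definition continuous_on01 (f : R -> R) : Prop :=
  forall x, 0 <= x <= 1 ->
    forall e, 0 < e -> exists d, 0 < d /\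
      forall y, 0 <= y <= 1 -> Rabs (y - x) < d -> Rabs (f y - f x) < e.

(* The set { |f x| : x in [0,1] }; its least upper bound is ||f||_{L^oo([0,1])}
   for continuous f. *)
Definition abs_image01 (f : R -> R) (r : R) : Prop :=
  exists x, 0 <= x <= 1 /\ r = Rabs (f x).

(* Main.v *)
Require Import Defs.
From Stdlib Require Import Reals.
Open Scope R_scope.
From Stdlib Require Import ZArith Znumtheory Lra Lia List.
Open Scope R_scope.

Section NT.
Local Open Scope Z_scope.
Fixpoint prodZ (m : nat -> Z) (n : nat) : Z :=
  match n with O => 1 | S n' => prodZ m n' * m n' end.

Lemma prodZ_pos m n : (forall i, (i < n)%nat -> 0 < m i) -> 0 < prodZ m n.
Proof.
  induction n; simpl; intros H; [lia|].
  apply Z.mul_pos_pos; [apply IHn; intros; apply H; lia| apply H; lia].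
Qed.

Lemma prodZ_div m n i : (i < n)%nat -> (m i | prodZ m n).
Proof.
  induction n; simpl; intros H; [lia|].
  destruct (Nat.eq_dec i n).
  - subst. apply Z.divide_factor_r.
  - apply Z.divide_mul_l. apply IHn. lia.
Qed.

Lemma prodZ_rp m n a : (forall i, (i < n)%nat -> rel_prime (m i) a) -> rel_prime (prodZ m n) a.
Proof.
  induction n; simpl; intros H.
  - apply rel_prime_1.
  - apply rel_prime_sym, rel_prime_mult; apply rel_prime_sym;
      [apply IHn; intros; apply H; lia | apply H; lia].
Qed.

Lemma crt (m : nat -> Z) (r : nat -> Z) n :
  (forall i, (i < n)%nat -> 0 < m i) ->
  (forall i j, (i < n)%nat -> (j < n)%nat -> i <> j -> rel_prime (m i) (m j)) ->
  exists W, 0 <= W /\ forall i, (i < n)%nat -> (m i | W - r i).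
Proof.
  induction n; intros Hpos Hrp.
  - exists 0. split; [lia| intros; lia].
  - destruct IHn as [W' [HW' Hd]].
    + intros; apply Hpos; lia.
    + intros; apply Hrp; lia.
    + pose (P := prodZ m n).
      assert (HP : 0 < P) by (apply prodZ_pos; intros; apply Hpos; lia).
      assert (Hr : rel_prime P (m n)).
      { apply prodZ_rp. intros. apply Hrp; lia. }
      destruct (rel_prime_bezout _ _ Hr) as [u v Huv].
      pose (W1 := W' + P * u * (r n - W')).
      assert (Hmn : 0 < m n) by (apply Hpos; lia).
      exists (W1 + Z.abs W1 * (P * m n)). split.
      * assert (1 <= P * m n) by nia.
        assert (Z.abs W1 <= Z.abs W1 * (P * m n)) by nia. lia.
      * intros i Hi. destruct (Nat.eq_dec i n).
        -- subst i.
           replace (W1 + Z.abs W1 * (P * m n) - r n) with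
             (m n * ((W' - r n) * v + Z.abs W1 * P)).
           ++ apply Z.divide_factor_l.
           ++ unfold W1. replace (P * u) with (1 - v * m n) by lia. ring.
        -- replace (W1 + Z.abs W1 * (P * m n) - r i) with
             ((W' - r i) + P * (u * (r n - W') + Z.abs W1 * m n)) by (unfold W1; ring).
           apply Z.divide_add_r; [apply Hd; lia|].
           apply Z.divide_mul_l. apply prodZ_div. lia.
Qed.

Lemma div_fact (d : Z) (K : nat) : 1 <= d <= Z.of_nat K -> (d | Z.of_nat (fact K)).
Proof.
  induction K; intros H; [lia|].
  rewrite fact_simpl, Nat2Z.inj_mul.
  destruct (Z.eq_dec d (Z.of_nat (S K))).
  - rewrite e. apply Z.divide_factor_l.
  - apply Z.divide_mul_r. apply IHK. lia.
Qed.

Lemma mZ_rp (N L : Z) (K i j : nat) : N = Z.of_nat (fact K) ->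
  (i < K)%nat -> (j < K)%nat -> i <> j ->
  rel_prime (1 + (Z.of_nat i + L) * N) (1 + (Z.of_nat j + L) * N).
Proof.
  intros HN Hi Hj Hij.
  assert (Hgen : forall x a, (x | 1 + a * N) -> (x | N) -> (x | 1)).
  { intros x a H1 H2. replace 1 with ((1 + a * N) - a * N) by ring.
    apply Z.divide_sub_r; [auto| apply Z.divide_mul_r; auto]. }
  apply Zis_gcd_intro; try apply Z.divide_1_l.
  intros x Hx1 Hx2.
  assert (Hxd : (x | (Z.of_nat j - Z.of_nat i) * N)).
  { replace ((Z.of_nat j - Z.of_nat i) * N) with
      ((1 + (Z.of_nat j + L) * N) - (1 + (Z.of_nat i + L) * N)) by ring.
    apply Z.divide_sub_r; auto. }
  assert (Hxr : rel_prime x N).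
  { apply Zis_gcd_intro; try apply Z.divide_1_l.
    intros y Hy1 Hy2. apply (Hgen y (Z.of_nat i + L)); [|exact Hy2].
    apply (Z.divide_trans _ x); auto. }
  rewrite Z.mul_comm in Hxd. pose proof (Gauss _ _ _ Hxd Hxr) as Hx.
  apply (Hgen x (Z.of_nat i + L)); auto.
  destruct (Z_lt_le_dec (Z.of_nat i) (Z.of_nat j)).
  - eapply Z.divide_trans; [exact Hx| rewrite HN; apply div_fact; lia].
  - apply Z.divide_opp_r in Hx.
    replace (- (Z.of_nat j - Z.of_nat i)) with (Z.of_nat i - Z.of_nat j) in Hx by ring.
    eapply Z.divide_trans; [exact Hx| rewrite HN; apply div_fact; lia].
Qed.
End NT.

Lemma Rabs_inv a b : Rabs a <= b -> -b <= a <= b.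
Proof.
  intros H. pose proof (Rle_abs a). pose proof (Rle_abs (-a)). rewrite Rabs_Ropp in H1. lra.
Qed.

Lemma sigma1_shift z (n : Z) : Rabs (z - 2 * IZR n) <= 1 -> sigma1 z = Rabs (z - 2 * IZR n).
Proof.
  intros H. unfold sigma1.
  destruct (base_Int_part ((z + 1) / 2)) as [B1 B2].
  set (q := Int_part ((z + 1) / 2)) in *.
  apply Rabs_inv in H.
  assert (Hq1 : (q <= n + 1)%Z).
  { apply le_IZR. rewrite plus_IZR. lra. }
  assert (Hq2 : (n < q + 1)%Z).
  { apply lt_IZR. rewrite plus_IZR. lra. }
  destruct (Z.eq_dec q n) as [e|e]; [rewrite e; reflexivity|].
  assert (q = (n + 1)%Z) by lia. rewrite H0, plus_IZR in *.
  assert (z = 2 * IZR n + 1) by lra. subst z.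
  replace (2 * IZR n + 1 - 2 * (IZR n + 1)) with (-1) by ring.
  replace (2 * IZR n + 1 - 2 * IZR n) with 1 by ring.
  rewrite Rabs_R1; unfold Rabs; destruct (Rcase_abs (-1)); lra.
Qed.

Lemma sigma1_range z : 0 <= sigma1 z <= 1.
Proof.
  unfold sigma1.
  destruct (base_Int_part ((z + 1) / 2)) as [B1 B2].
  split; [apply Rabs_pos| apply Rabs_le; lra].
Qed.

Lemma sigma_pos x : 0 <= x -> Defs.sigma x = sigma1 x.
Proof. intros H; unfold Defs.sigma; destruct (Rle_dec 0 x); [reflexivity| lra]. Qed.

Lemma sigma_neg x : x < 0 -> Defs.sigma x = -1 + 1 / (1 - x).
Proof.
  intros H; unfold Defs.sigma; destruct (Rle_dec 0 x); [lra|].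
  rewrite Rabs_left by lra. field. lra.
Qed.

Lemma sigma_gt x : -1 < Defs.sigma x.
Proof.
  destruct (Rle_dec 0 x).
  - rewrite sigma_pos by lra. pose proof (sigma1_range x). lra.
  - rewrite sigma_neg by lra.
    assert (0 < 1 / (1 - x)) by (apply Rdiv_lt_0_compat; lra). lra.
Qed.

Lemma sigma1_lin x (n : Z) : 0 <= x - 2 * IZR n <= 1 -> sigma1 x = x - 2 * IZR n.
Proof.
  intros H. rewrite (sigma1_shift x n); [apply Rabs_pos_eq; lra| apply Rabs_le; lra].
Qed.

Fixpoint maxf (f : R -> R) (K n : nat) : R :=
  match n with O => 0 | S n' => Rmax (maxf f K n') (Rabs (f (INR n' / INR K))) end.

Lemma maxf_ge f K n k : (k < n)%nat -> Rabs (f (INR k / INR K)) <= maxf f K n.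
Proof.
  induction n; simpl; intros H; [lia|].
  destruct (Nat.eq_dec k n).
  - subst. apply Rmax_r.
  - eapply Rle_trans; [apply IHn; lia| apply Rmax_l].
Qed.

Lemma maxf_le f K n B : 0 <= B -> (forall k, (k < n)%nat -> Rabs (f (INR k / INR K)) <= B) ->
  maxf f K n <= B.
Proof.
  induction n; simpl; intros H0 H; [lra|].
  apply Rmax_lub; [apply IHn; auto; intros; apply H; lia| apply H; lia].
Qed.

Lemma nat_above r : exists n : nat, r < INR n.
Proof.
  destruct (archimed r) as [H1 _].
  exists (Z.to_nat (up r)).
  destruct (Z_le_dec 0 (up r)).
  - rewrite INR_IZR_INZ, Z2Nat.id by lia. lra.
  - assert (IZR (up r) < 0) by (apply IZR_lt; lia). pose proof (pos_INR (Z.to_nat (up r))). lra.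
Qed.

Theorem theorem14 (f : R -> R) (eps : R) (K : nat) :
  continuous_on01 f ->
  0 < eps ->
  (1 <= K)%nat ->
  (forall x1 x2, 0 <= x1 <= 1 -> 0 <= x2 <= 1 ->
     Rabs (x1 - x2) < 1 / INR K -> Rabs (f x1 - f x2) < eps / 2) ->
  exists phi : R -> R,
    generated_by_net 2 3 phi /\
    (forall normf, is_lub (abs_image01 f) normf ->
       forall x, 0 <= x <= 1 -> Rabs (phi x) <= normf + 1) /\
    (forall x, (exists k : nat, (k < K)%nat /\
                  2 * INR k / (2 * INR K) <= x <= (2 * INR k + 1) / (2 * INR K)) ->
       Rabs (phi x - f x) < eps).
Proof.
  intros Hc Heps HK Hunif.
  set (M0 := maxf f K K).
  assert (HM0 : 0 <= M0) by (apply (Rle_trans _ (Rabs (f (INR 0 / INR K)))); [apply Rabs_pos| apply maxf_ge; lia]).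
  set (M := M0 + 1).
  destruct (nat_above (8 * M / eps)) as [L0 HL0].
  set (L := S L0).
  assert (HL : 8 * M / eps < INR L) by (unfold L; rewrite S_INR; lra).
  set (N := fact K).
  assert (HN : 1 <= INR N).
  { replace 1 with (INR 1) by reflexivity. apply le_INR. pose proof (lt_O_fact K). unfold N. lia. }
  assert (HKr : 1 <= INR K) by (replace 1 with (INR 1) by reflexivity; apply le_INR; lia).
  set (mZ := fun k : nat => (1 + (Z.of_nat k + Z.of_nat L) * Z.of_nat N)%Z).
  set (mR := fun k : nat => 1 + (INR k + INR L) * INR N).
  assert (HmRZ : forall k, IZR (mZ k) = mR k).
  { intros k. unfold mZ, mR. rewrite plus_IZR, mult_IZR, plus_IZR, <- !INR_IZR_INZ. reflexivity. }
  assert (HmR : forall k, INR L < mR k).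
  { intros k. unfold mR. pose proof (pos_INR k). assert (1 <= INR L) by (unfold L; rewrite S_INR; pose proof (pos_INR L0); lra). nra. }
  set (y := fun k : nat => f (INR k / INR K)).
  set (t := fun k : nat => (y k + M) / (2 * M)).
  set (rZ := fun k : nat => Int_part (t k * mR k / 2)).
  destruct (crt mZ rZ K) as [W [HW0 HW]].
  { intros i _. apply lt_IZR. rewrite HmRZ. pose proof (HmR i). pose proof (pos_INR L). simpl. lra. }
  { intros i j Hi Hj Hij. unfold mZ. apply (mZ_rp _ _ K); auto. }
  set (phi := realize
    (mkLayer 2 (fun j _ => match j with O => 1 | _ => 2 * INR K end) (fun _ => 0) ::
     mkLayer 1 (fun _ i => match i with O => - (INR N * INR K) | _ => INR N / 2 end) (fun _ => - (INR L * INR N)) ::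
     mkLayer 1 (fun _ _ => 2 * IZR W) (fun _ => 2 * IZR W) :: nil) (fun _ => 2 * M) (- M)).
  assert (HW0r : 0 <= IZR W) by (apply IZR_le; lia).
  assert (Hout : forall b, -1 < b -> 0 <= Defs.sigma (0 + 2 * IZR W * b + 2 * IZR W) <= 1).
  { intros b Hb. rewrite sigma_pos by nra. apply sigma1_range. }
  exists phi. split; [|split].
  - exists (mkLayer 2 (fun j _ => match j with O => 1 | _ => 2 * INR K end) (fun _ => 0) ::
     mkLayer 1 (fun _ i => match i with O => - (INR N * INR K) | _ => INR N / 2 end) (fun _ => - (INR L * INR N)) ::
     mkLayer 1 (fun _ _ => 2 * IZR W) (fun _ => 2 * IZR W) :: nil), (fun _ => 2 * M), (- M).
    split; [simpl; lia| split; [repeat constructor; simpl; lia| intros; reflexivity]].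
  - intros normf [Hub _] x Hx.
    assert (Hn0 : forall k, (k < K)%nat -> Rabs (f (INR k / INR K)) <= normf).
    { intros k Hk. apply Hub. exists (INR k / INR K). split; [|reflexivity].
      assert (INR k < INR K) by (apply lt_INR; lia). pose proof (pos_INR k).
      split; [unfold Rdiv; apply Rmult_le_pos; [lra| left; apply Rinv_0_lt_compat; lra]| apply (Rmult_le_reg_r (INR K)); [lra|]; unfold Rdiv; rewrite Rmult_assoc, Rinv_l; lra]. }
    assert (0 <= normf) by (eapply Rle_trans; [apply Rabs_pos| apply (Hn0 0%nat); lia]).
    assert (M0 <= normf) by (apply maxf_le; auto).
    unfold phi, realize; simpl.
    match goal with |- context [Defs.sigma (0 + 2 * IZR W * ?b + 2 * IZR W)] =>
      pose proof (Hout b (sigma_gt _)) end.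
    apply Rabs_le. unfold M in *. nra.
  - intros x [k [Hk [Hx1 Hx2]]].
    assert (HkK : INR k + 1 <= INR K) by (rewrite <- S_INR; apply le_INR; lia).
    assert (Hk0 := pos_INR k).
    assert (HxA : 2 * INR k <= 2 * INR K * x <= 2 * INR k + 1).
    { assert (E1: 2 * INR k = 2*INR K * (2*INR k/(2*INR K))) by (field; lra).
      assert (E2: 2*INR k+1 = 2*INR K * ((2*INR k+1)/(2*INR K))) by (field; lra).
      split; [rewrite E1 at 1 | rewrite E2]; apply Rmult_le_compat_l; lra. }
    assert (Hx01 : 0 <= x <= 1) by (split; nra).
    set (d := 2 * INR K * x - 2 * INR k).
    set (u := / INR K).
    assert (Hu : 0 < u) by (apply Rinv_0_lt_compat; lra).
    assert (Hxu : x = (d / 2 + INR k) * u) by (unfold u, d; field; lra).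
    assert (Hy : Rabs (y k - f x) < eps / 2).
    { unfold y. apply Hunif.
      - split; [unfold Rdiv; apply Rmult_le_pos; [lra| left; apply Rinv_0_lt_compat; lra]|].
        apply (Rmult_le_reg_r (INR K)); [lra|]; unfold Rdiv; rewrite Rmult_assoc, Rinv_l; lra.
      - lra.
      - replace (INR k / INR K) with (INR k * u) by reflexivity.
        replace (1 / INR K) with u by (unfold u; field; lra).
        apply Rabs_def1; rewrite Hxu; unfold d in *; nra. }
    destruct (HW k Hk) as [q Hq].
    assert (HWq : IZR W = IZR q * mR k + IZR (rZ k)).
    { rewrite <- HmRZ, <- mult_IZR, <- plus_IZR. f_equal. lia. }
    assert (Hm := HmR k). assert (HL1 : 1 <= INR L) by (unfold L; rewrite S_INR; pose proof (pos_INR L0); lra).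
    assert (E1 : Defs.sigma (0 + 1 * x + 0) = x).
    { rewrite sigma_pos by lra. rewrite (sigma1_lin _ 0%Z); simpl; lra. }
    assert (E2 : Defs.sigma (0 + 2 * INR K * x + 0) = d).
    { rewrite sigma_pos by lra. rewrite (sigma1_lin _ (Z.of_nat k)); rewrite <- INR_IZR_INZ; unfold d; lra. }
    assert (E3 : 0 + - (INR N * INR K) * x + INR N / 2 * d + - (INR L * INR N) = 1 - mR k)
      by (unfold mR, d; field).
    unfold phi, realize; cbn [run_hidden fsum lw lW lb]. rewrite E1, E2, E3.
    rewrite (sigma_neg (1 - mR k)) by lra.
    replace (1 - (1 - mR k)) with (mR k) by ring.
    set (r := IZR (rZ k)).
    assert (E4 : 0 + 2 * IZR W * (-1 + 1 / mR k) + 2 * IZR W = 2 * r / mR k + 2 * IZR q)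
      by (rewrite HWq; unfold r; field; lra).
    destruct (base_Int_part (t k * mR k / 2)) as [B1 B2].
    fold (rZ k) in B1, B2. fold r in B1, B2.
    assert (Hyk : Rabs (y k) <= M0) by (apply maxf_ge; auto).
    apply Rabs_inv in Hyk.
    assert (Ht : t k * (2 * M) = y k + M) by (unfold t; field; unfold M; lra).
    assert (Ht0 : 0 < t k < 1) by (unfold M in *; split; nra).
    assert (Hr0 : 0 <= r).
    { unfold r. apply IZR_le. assert (-1 < rZ k)%Z; [|lia]. apply lt_IZR. fold r. nra. }
    set (e := 2 * r / mR k).
    assert (He : e * mR k = 2 * r) by (unfold e; field; lra).
    assert (He0 : 0 <= e <= t k) by (split; nra).
    assert (E5 : e + 2 * IZR q = 2 * IZR W / mR k) by (unfold e; rewrite HWq; fold r; field; lra).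
    assert (0 <= 2 * IZR W / mR k) by (unfold Rdiv; apply Rmult_le_pos; [lra| left; apply Rinv_0_lt_compat; lra]).
    rewrite E4, sigma_pos by lra.
    rewrite (sigma1_lin _ q) by (replace (e + 2 * IZR q - 2 * IZR q) with e by ring; lra).
    replace (2 * r / mR k + 2 * IZR q - 2 * IZR q) with e by (unfold e; ring).
    assert (Hte : (t k - e) * mR k < 2) by nra.
    assert (H8 : 8 * M < eps * mR k).
    { assert (8 * M < eps * INR L).
      { apply (Rmult_lt_compat_l eps) in HL; [|lra]. replace (eps * (8 * M / eps)) with (8 * M) in HL by (field; lra). lra. }
      nra. }
    assert (HM : 0 < M) by (unfold M; lra).
    assert (Hfin : 4 * M * (t k - e) < eps) by nra.
    replace (0 + 2 * M * e + - M - f x) with (2 * M * (e - t k) + (y k - f x)) by nra.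
    eapply Rle_lt_trans; [apply Rabs_triang|].
    assert (Rabs (2 * M * (e - t k)) < eps / 2); [|lra].
    assert (0 <= 2 * M * (t k - e)) by (apply Rmult_le_pos; lra).
    replace (2 * M * (e - t k)) with (- (2 * M * (t k - e))) by ring.
    rewrite Rabs_Ropp, Rabs_pos_eq by lra. lra.
Qed.
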